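(* Let $R$ be a semiring and $(X,\pi^X)$ an $R$-convex set. An equivalence relation $\sim$ on $X$ is a convex equivalence relation if and only if, for all $p,q\in D_R(X)$ with $p\sim_D q$, we have $\pi^X(p)\sim\pi^X(q)$.
   Context: A semiring is a set $R$ with commutative unital monoid structures $+$ (unit $0$) and $\cdot$ (unit $1$) with $\cdot$ distributing over $+$ and $0\cdot r=0$. $D_R(X)$ is the set of finitely supported $p:X\to R$ with $\sum_xp(x)=1$; $D_R$ is a monad on $\mathsf{Set}$ (pushforward on maps, multiplication $\mu(P)(x)=\sum_qP(q)q(x)$, unit Dirac delta). An $R$-convex set is a $D_R$-algebra $(X,\pi^X:D_R(X)\to X)$; write $\sum_i\alpha_ix_i$ for $\pi^X$ of the formal combination. $\Delta^n_R=D_R(\{0,\dots,n\})$. A convex relation on $X$ is a relation $\sim$ such that for any $\alpha\in\Delta^n_R$, if $x_i\sim y_i$ for all $i$ then $\sum_i\alpha_ix_i\sim\sum_i\alpha_iy_i$; a convex equivalence relation is a convex relation that is an equivalence relation. For an equivalence relation $\sim$ on $X$, $\sim_D$ is the relation on $D_R(X)$ with $p\sim_Dq$ iff $\sum_{y\in[x]}p(y)=\sum_{y\in[x]}q(y)$ for every equivalence class $[x]$. *)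

(* Defs.v *)
From HB Require Import structures.
From mathcomp Require Import all_boot all_order all_algebra.
From mathcomp Require Import finmap.
From mathcomp Require Import boolp.

Set Implicit Arguments.
Unset Strict Implicit.
Unset Printing Implicit Defensive.

Import GRing.Theory.
Local Open Scope ring_scope.
Local Open Scope fset_scope.

(* A semiring in the sense of the paper (commutative, unital, 0 absorbing,
   possibly trivial) is a [comPzSemiRingType]. *)
Definition fsf (R : comPzSemiRingType) (X : choiceType) :=
  {fsfun X -> R with 0}.

(* p belongs to D_R(X): its values sum to 1. *)
Definition is_dist (R : comPzSemiRingType) (X : choiceType) (p : fsf R X) :=
  \sum_(x <- finsupp p) p x = 1.

Definition dirac (R : comPzSemiRingType) (X : choiceType) (x : X) : fsf R X :=
  [fsfun y in [fset x] => (1 : R) | 0].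

Definition pushf (R : comPzSemiRingType) (X Y : choiceType) (f : X -> Y)
  (p : fsf R X) : fsf R Y :=
  [fsfun y in f @` finsupp p => \sum_(x <- finsupp p | f x == y) p x | 0].

Definition mult (R : comPzSemiRingType) (X : choiceType)
  (P : fsf R (fsf R X)) : fsf R X :=
  [fsfun x in \bigcup_(q <- finsupp P) finsupp q =>
     \sum_(q <- finsupp P) P q * q x | 0].

(* (X, pi) is a D_R-algebra (an R-convex set).  pi is given as a map on all
   finitely supported functions; only its restriction to D_R(X) matters,
   and the algebra laws are imposed on D_R(X) and D_R(D_R(X)) only. *)
Definition is_convex_set (R : comPzSemiRingType) (X : choiceType)
  (pi : fsf R X -> X) : Prop :=
  (forall x : X, pi (dirac R x) = x) /\
  (forall P : fsf R (fsf R X), is_dist P ->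
     (forall q, q \in finsupp P -> is_dist q) ->
     pi (mult P) = pi (pushf pi P)).

Definition simplex (R : comPzSemiRingType) (n : nat) (a : fsf R 'I_n.+1) :=
  is_dist a.

(* The convex combination sum_i a_i x_i := pi (D_R(i |-> x_i)(a)). *)
Definition convex_comb (R : comPzSemiRingType) (X : choiceType)
  (pi : fsf R X -> X) (n : nat) (a : fsf R 'I_n.+1) (x : 'I_n.+1 -> X) : X :=
  pi (pushf x a).

Definition convex_relation (R : comPzSemiRingType) (X : choiceType)
  (pi : fsf R X -> X) (r : X -> X -> Prop) : Prop :=
  forall (n : nat) (a : fsf R 'I_n.+1) (x y : 'I_n.+1 -> X),
    simplex a -> (forall i, r (x i) (y i)) ->
    r (convex_comb pi a x) (convex_comb pi a y).

Definition is_equiv_rel (X : Type) (r : X -> X -> Prop) : Prop :=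
  (forall x, r x x) /\ (forall x y, r x y -> r y x) /\
  (forall x y z, r x y -> r y z -> r x z).

Definition convex_equivalence (R : comPzSemiRingType) (X : choiceType)
  (pi : fsf R X -> X) (r : X -> X -> Prop) : Prop :=
  convex_relation pi r /\ is_equiv_rel r.

Definition rel_D (R : comPzSemiRingType) (X : choiceType)
  (r : X -> X -> Prop) (p q : fsf R X) : Prop :=
  forall x : X,
    \sum_(y <- finsupp p | `[< r y x >]) p y =
    \sum_(y <- finsupp q | `[< r y x >]) q y.

(* Main.v *)
Require Import Defs.
From HB Require Import structures.
From mathcomp Require Import all_boot all_order all_algebra.
From mathcomp Require Import finmap.
From mathcomp Require Import boolp.
Import GRing.Theory.
Set Implicit Arguments.
Unset Strict Implicit.
Local Open Scope ring_scope.
Local Open Scope fset_scope.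

Section S.
Variable R : comPzSemiRingType.

Lemma sum_pred1 (T : eqType) (s : seq T) (w : T) (F : T -> R) : uniq s ->
  \sum_(z <- s | z == w) F z = if w \in s then F w else 0.
Proof.
move=> us; case: ifP => ws.
  by rewrite -big_filter (@filter_pred1_uniq _ s w us ws) big_seq1.
by apply: big1_seq => z /andP[/eqP -> ]; rewrite ws.
Qed.

Lemma pushfE (I Y : choiceType) (f : I -> Y) (a : fsf R I) w :
  pushf f a w = \sum_(i <- finsupp a | f i == w) a i.
Proof.
rewrite /pushf fsfun_fun; case: ifP => // /negbT H; symmetry.
apply: big1_seq => i /andP[/eqP fi iin]; case/negP: H.
by rewrite -fi in_imfset.
Qed.

Lemma sum_pushf (I Y : choiceType) (f : I -> Y) (a : fsf R I) (P : pred Y) :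
  \sum_(w <- finsupp (pushf f a) | P w) pushf f a w =
  \sum_(i <- finsupp a | P (f i)) a i.
Proof.
have sub : finsupp (pushf f a) `<=` f @` finsupp a.
  apply/fsubsetP => w; rewrite mem_finsupp /pushf fsfun_fun.
  by case: ifP => //; rewrite eqxx.
rewrite big_mkcond (big_fset_incl _ sub); last first.
  by move=> x _ xn; rewrite fsfun_dflt // if_same.
rewrite (eq_big_seq (fun w => \sum_(i <- finsupp a) (if P w then (if f i == w then a i else 0) else 0))); last first.
  move=> w wB; rewrite pushfE; case: (P w); last by rewrite big1.
  by rewrite big_mkcond.
rewrite exchange_big /= [RHS]big_mkcond; apply: eq_big_seq => i ia.
rewrite (eq_bigr (fun w => if w == f i then (if P (f i) then a i else 0) else 0)); last first.
  by move=> w _; case: eqP => [->|]; [rewrite eqxx | case: (P w) => //; case: eqP => // ->].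
rewrite -big_mkcond sum_pred1 ?fset_uniq //=.
by rewrite in_imfset.
Qed.

Lemma sum_fin (I : finType) (a : fsf R I) (P : pred I) :
  \sum_(i <- finsupp a | P i) a i = \sum_(i | P i) a i.
Proof.
rewrite big_mkcond [RHS]big_mkcond big_uniq ?fset_uniq //=.
rewrite [RHS](bigID (mem (finsupp a))) /=.
rewrite [X in (_ + X)%R]big1 ?addr0 //.
by move=> i /negP ia; rewrite fsfun_dflt ?if_same //; apply/negP.
Qed.

Lemma pushf_id (X : choiceType) (p : fsf R X) : pushf id p = p.
Proof.
apply/fsfunP => w; rewrite pushfE sum_pred1 ?fset_uniq //.
by case: ifP => // /negbT H; rewrite fsfun_dflt.
Qed.

Definition idx (X : choiceType) (p : fsf R X) (x0 : X) : fsf R 'I_(size (finsupp p)).+1 :=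
  let g := fun i : 'I_(size (finsupp p)).+1 =>
     if (i < size (finsupp p))%N then p (nth x0 (finsupp p) i) else 0 in
  [fsfun i in [fset j | j in 'I_(size (finsupp p)).+1] => g i | 0].

Lemma idxE (X : choiceType) (p : fsf R X) (x0 : X) i :
  idx p x0 i = if (i < size (finsupp p))%N then p (nth x0 (finsupp p) i) else 0.
Proof. by rewrite /idx fsfun_fun in_imfset. Qed.

Lemma pushf_idx (X Y : choiceType) (p : fsf R X) (x0 : X) (f : X -> Y) :
  pushf (fun i : 'I_(size (finsupp p)).+1 => f (nth x0 (finsupp p) i)) (idx p x0) = pushf f p.
Proof.
apply/fsfunP => w; rewrite !pushfE sum_fin big_mkcond big_ord_recr /=.
rewrite idxE ltnn if_same addr0 [RHS]big_mkcond (big_nth x0) big_mkord.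
apply: eq_bigr => i _; rewrite idxE /= ltn_ord.
by case: ifP.
Qed.
End S.

Theorem mainTheorem8 (R : comPzSemiRingType) (X : choiceType)
  (pi : fsf R X -> X) (Hpi : is_convex_set pi)
  (r : X -> X -> Prop) (Heq : is_equiv_rel r) :
  convex_equivalence pi r <->
  (forall p q : fsf R X, is_dist p -> is_dist q -> rel_D r p q ->
     r (pi p) (pi q)).
Proof.
have [Hrefl [Hsym Htrans]] := Heq.
split.
- move=> [Hconv _] p q dp dq Hd.
  have exr : forall x, exists z, `[< r z x >].
    by move=> x; exists x; apply/asboolP.
  pose rep := fun x => xchoose (exr x).
  have rep_r : forall x, r (rep x) x.
    by move=> x; apply/asboolP; exact: (xchooseP (exr x)).
  have rep_eq : forall x y, r x y -> rep x = rep y.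
    move=> x y hxy; apply: eq_xchoose => z; apply: asbool_equiv_eq.
    by split => h; [apply: Htrans hxy | apply: Htrans h (Hsym _ _ hxy)].
  have key : forall p, is_dist p -> r (pi p) (pi (pushf rep p)).
    move=> p0 dp0.
    pose x0 := pi p0.
    have E1 : pushf (fun i : 'I_(size (finsupp p0)).+1 => nth x0 (finsupp p0) i) (idx p0 x0) = p0.
      by rewrite (pushf_idx p0 x0 id) pushf_id.
    have sa : simplex (idx p0 x0).
      rewrite /simplex /is_dist.
      by rewrite -(sum_pushf (fun i : 'I_(size (finsupp p0)).+1 => nth x0 (finsupp p0) i) _ (fun _ => true)) E1.
    have := Hconv _ (idx p0 x0) (fun i => nth x0 (finsupp p0) i)
      (fun i => rep (nth x0 (finsupp p0) i)) sa (fun i => Hsym _ _ (rep_r _)).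
    by rewrite /convex_comb E1 pushf_idx.
  have Eq : pushf rep p = pushf rep q.
    apply/fsfunP => w; rewrite !pushfE.
    have [hw|hw] := boolP (rep w == w).
      have E : forall z, (rep z == w) = `[< r z w >].
        move=> z; apply/idP/idP => [/eqP <-| /asboolP H].
          by apply/asboolP; exact: Hsym _ _ (rep_r z).
        by rewrite (rep_eq _ _ H).
      rewrite !(eq_bigl _ _ E); exact: Hd.
    have F : forall z, (rep z == w) = false.
      move=> z; apply/negP => /eqP hz; case/negP: hw.
      by rewrite -hz (rep_eq _ _ (rep_r z)).
    by rewrite !big1 // => z; rewrite F.
  apply: Htrans (key p dp) _; rewrite Eq; exact: Hsym _ _ (key q dq).
- move=> H; split; last exact: Heq.
  move=> n a x y sa hxy; apply: H.
  + by rewrite /is_dist (sum_pushf x a (fun _ => true)).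
  + by rewrite /is_dist (sum_pushf y a (fun _ => true)).
  + move=> z; rewrite (sum_pushf x a (fun w => `[< r w z >])) (sum_pushf y a (fun w => `[< r w z >])).
    apply: eq_bigl => i; apply: asbool_equiv_eq.
    by split => h; [apply: Htrans (Hsym _ _ (hxy i)) h | apply: Htrans (hxy i) h].
Qed.
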